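(* Let $G=(V,E)$ be a graph with a partition $(V_1,V_2)$ of $V$ such that $G[V_1]$ and $G[V_2]$ are $P_5$-free, and let $k$ be an integer. Suppose that: $k\ge 1$; $G$ contains a $P_5$; every vertex of $G$ lies on some $P_5$ in $G$; every $P_5$ in $G$ contains at least $4$ vertices of $V_2$; and there is no vertex $v\in V_2$ that is isolated in $G[V_2]$ and for which there is a path $(v,w,x,y,z)$ in $G$ with $w\in V_1$. Let $e=\{u,v\}$ be an edge of $G[V_2]$ such that at least two vertices of $V_1$ are adjacent to $u$ or $v$, and each of $u$ and $v$ has at least one neighbour in $V_1$. Let $C_e$ be the connected component of $G[V_2]$ containing $e$. Then every vertex $w\in V_1$ adjacent to $u$ or $v$ satisfies $N(w)\subseteq V(C_e)$.
   Context: Graphs are finite, simple and undirected. A $P_5$ is a path on $5$ vertices (as a not necessarily induced subgraph), written as the sequence of its vertices; a graph is $P_5$-free if it contains no $P_5$. $G[X]$ denotes the subgraph induced by $X$; $N(w)$ is the set of neighbours of $w$ in $G$. *)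

(* Defs.v *)
From mathcomp Require Import all_boot.
Set Implicit Arguments. Unset Strict Implicit. Unset Printing Implicit Defensive.

Definition simple_graph (T : finType) (g : rel T) : Prop :=
  symmetric g /\ irreflexive g.

(* (a,b,c,d,f) is a P5 (not necessarily induced) in g: 5 distinct vertices,
   consecutive ones adjacent. *)
Definition is_P5 (T : finType) (g : rel T) (a b c d f : T) : bool :=
  [&& uniq [:: a; b; c; d; f], g a b, g b c, g c d & g d f].

(* G[X] is P5-free: no P5 of g all of whose vertices lie in X
   (edges of G[X] are exactly the edges of g between vertices of X). *)
Definition P5_free_in (T : finType) (g : rel T) (X : {set T}) : Prop :=
  forall a b c d f : T, is_P5 g a b c d f ->
    ~~ [&& a \in X, b \in X, c \in X, d \in X & f \in X].

Definition induced_rel (T : finType) (g : rel T) (X : {set T}) : rel T :=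
  [rel x y | [&& g x y, x \in X & y \in X]].

Definition component (T : finType) (g : rel T) (X : {set T}) (u : T) : {set T} :=
  [set x | connect (induced_rel g X) u x].

Definition isolated_in (T : finType) (g : rel T) (X : {set T}) (v : T) : Prop :=
  v \in X /\ forall x, x \in X -> ~~ g v x.

(* Main.v *)
Require Import Defs.
From mathcomp Require Import all_boot.
From mathcomp Require Import zify.
Set Implicit Arguments. Unset Strict Implicit. Unset Printing Implicit Defensive.

Section Aux.
Variables (T : finType) (g : rel T).
Hypothesis sym : symmetric g.

Lemma cross0 (P : pred T) a s : path g a s -> P a -> ~~ all P (a :: s) ->
  exists y z, [/\ g y z, P y & ~~ P z].
Proof.
elim: s a => [|b s IH] a /=; first by move=> _ -> .
move=> /andP [gab pth] Pa; rewrite Pa /=.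
case Pb: (P b) => /= Hn.
  by apply: (IH b) => //=; rewrite Pb.
by exists a, b; rewrite Pb.
Qed.

Lemma cross1 (P : pred T) a s : path g a s -> has P (a :: s) -> ~~ all P (a :: s) ->
  exists y z, [/\ g y z, P y & ~~ P z].
Proof.
elim: s a => [|b s IH] a.
  by move=> _ /=; rewrite orbF => ->.
case Pa: (P a); first by move=> p _; apply: cross0.
move=> /= /andP [gab pth]; rewrite Pa /= => Hh _.
case Pb: (P b); first by exists b, a; rewrite Pa Pb sym.
apply: (IH b) => //=; by rewrite Pb.
Qed.

Lemma cnt_disj (V1 V2 : {set T}) (l : seq T) : [disjoint V1 & V2] ->
  count (fun x => x \in V2) l + count (fun x => x \in V1) l <= size l.
Proof.
move=> dis; elim: l => //= y l IH.
have: ~~ ((y \in V1) && (y \in V2)).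
  by apply/negP => /andP [h1 h2]; move/disjointFr: dis => /(_ y h1); rewrite h2.
case: (y \in V1); case: (y \in V2) => //= _; lia.
Qed.
End Aux.

Ltac kill := repeat match goal with H : is_true (~~ (?a == ?b)) |- _ =>
  rewrite ?(negbTE H) ?(eq_sym b a) ?(negbTE H); clear H end.

Theorem lemma6 (T : finType) (g : rel T) (V1 V2 : {set T}) (k : nat) :
  simple_graph g ->
  (* (V1, V2) is a partition of V *)
  [disjoint V1 & V2] -> V1 :|: V2 = [set: T] ->
  P5_free_in g V1 -> P5_free_in g V2 ->
  1 <= k ->
  (exists a b c d f, is_P5 g a b c d f) ->
  (forall x : T, exists a b c d f, is_P5 g a b c d f /\ x \in [:: a; b; c; d; f]) ->
  (forall a b c d f, is_P5 g a b c d f ->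
     4 <= count (fun x => x \in V2) [:: a; b; c; d; f]) ->
  ~ (exists v w x y z, isolated_in g V2 v /\ is_P5 g v w x y z /\ w \in V1) ->
  forall u v : T, u \in V2 -> v \in V2 -> g u v ->
  2 <= #|[set w in V1 | g w u || g w v]| ->
  (exists w, (w \in V1) && g u w) -> (exists w, (w \in V1) && g v w) ->
  forall w, w \in V1 -> g w u || g w v ->
  forall x, g w x -> x \in component g V2 u.
Proof.
move=> [sym irr] dis _ _ _ _ _ Hcov H4 _ u v uV2 vV2 guv H2 [yu /andP [yu1 gu]]
  [yv /andP [yv1 gv]] w w1 gw x gwx.
have V12 t : t \in V1 -> t \in V2 = false.
  by move=> h; move/disjointFr: dis => /(_ t h).
have neqV t s : t \in V1 -> s \in V2 -> (t == s) = false.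
  by move=> h1 h2; apply/negbTE/eqP => e; move: h2; rewrite -e V12.
have irr' t s : g t s -> (t == s) = false.
  by move=> h; apply/negbTE/eqP => e; move: h; rewrite e irr.
have two a b c d f : is_P5 g a b c d f ->
   2 <= count (fun t => t \in V1) [:: a; b; c; d; f] -> False.
  move=> p c2; have := H4 _ _ _ _ _ p; have := cnt_disj [:: a; b; c; d; f] dis.
  rewrite [size _]/=.
  move: c2; set n1 := count _ _; set n2 := count _ _ => c2 h1 h2.
  have := leq_add h2 c2; move=> h3; have := leq_trans h3 h1; by [].
have C4 c0 c1 c2 c3 : uniq [:: c0; c1; c2; c3] -> g c0 c1 -> g c1 c2 -> g c2 c3 ->
   g c3 c0 -> c0 \in V1 -> c1 \in V1 -> False.
  move=> un g01 g12 g23 g30 i0 i1.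
  have [a [b [c [d [f [p inp]]]]]] := Hcov c0.
  have p' := p; move: p' => /and5P [un5 gab gbc gcd gdf].
  have [y [z [gyz Py Pz]]] : exists y z,
    [/\ g y z, (fun t => t \in [:: c0; c1; c2; c3]) y
      & ~~ (fun t => t \in [:: c0; c1; c2; c3]) z].
    apply: (@cross1 T g sym _ a [:: b; c; d; f]).
    - by rewrite /= gab gbc gcd gdf.
    - by apply/hasP; exists c0 => //; rewrite inE eqxx.
    - apply/negP => /allP sub.
      by have := uniq_leq_size un5 sub.
  move: Pz; rewrite /= !inE !negb_or => /and4P [z0 z1 z2 z3].
  move: un; rewrite /= !inE !negb_or => /andP [/and3P [n01 n02 n03]]
    /andP [/andP [n12 n13]] /andP [n23 _].
  move: Py; rewrite /= !inE => /or4P [] /eqP E; subst y.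
  - apply: (two c1 c2 c3 c0 z); last by rewrite /= i0 i1; case: (c2 \in V1); case: (c3 \in V1); case: (z \in V1).
    rewrite /is_P5 /= !inE; kill; rewrite /= ?g01 ?g12 ?g23 ?g30 ?gyz ?(sym c0 c3) ?g30 ?(sym c3 c2) ?g23 ?(sym c2 c1) ?g12 //.
  - apply: (two c0 c3 c2 c1 z); last by rewrite /= i0 i1; case: (c3 \in V1); case: (c2 \in V1); case: (z \in V1).
    rewrite /is_P5 /= !inE; kill; rewrite /= ?g01 ?g12 ?g23 ?g30 ?gyz ?(sym c0 c3) ?g30 ?(sym c3 c2) ?g23 ?(sym c2 c1) ?g12 //.
  - apply: (two c3 c0 c1 c2 z); last by rewrite /= i0 i1; case: (c3 \in V1); case: (c2 \in V1); case: (z \in V1).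
    rewrite /is_P5 /= !inE; kill; rewrite /= ?g01 ?g12 ?g23 ?g30 ?gyz ?(sym c0 c3) ?g30 ?(sym c3 c2) ?g23 ?(sym c2 c1) ?g12 //.
  - apply: (two c0 c1 c2 c3 z); last by rewrite /= i0 i1; case: (c2 \in V1); case: (c3 \in V1); case: (z \in V1).
    rewrite /is_P5 /= !inE; kill; rewrite /= ?g01 ?g12 ?g23 ?g30 ?gyz ?(sym c0 c3) ?g30 ?(sym c3 c2) ?g23 ?(sym c2 c1) ?g12 //.
have key p q y : p \in V2 -> q \in V2 -> g p q -> y \in V1 -> y != w ->
   g w p -> g q y -> x != p -> x != q -> False.
  move=> p2 q2 gpq y1 yw gwp gqy xp xq.
  have xw : (x == w) = false by rewrite eq_sym irr'.
  have wp := neqV _ _ w1 p2; have wq := neqV _ _ w1 q2.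
  have yp := neqV _ _ y1 p2; have yq := neqV _ _ y1 q2.
  case: (eqVneq y x) => [E|yx].
    subst y.
    apply: (C4 x w p q) => //; last by rewrite sym.
    by rewrite /= !inE xw (negbTE xp) (negbTE xq) wp wq irr'.
  apply: (two x w p q y); last by rewrite /= w1 y1;  case: (x \in V1); case: (p \in V1); case: (q \in V1).
  rewrite /is_P5 /= !inE (sym x w) gwx gwp gpq gqy; kill.
  by rewrite ?xw ?wp ?wq ?(eq_sym p y) ?yp ?(eq_sym q y) ?yq ?(irr' p q).
case: (eqVneq x u) => [->|xu]; first by rewrite inE connect0.
case: (eqVneq x v) => [->|xv].
  by rewrite inE; apply: connect1; apply/and3P.
exfalso.
have wA : w \in [set w in V1 | g w u || g w v] by rewrite inE w1 gw.
have [w' w'A] : exists w', w' \in [set w in V1 | g w u || g w v] :\ w.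
  apply/set0Pn; rewrite -card_gt0.
  by move: H2; rewrite (cardsD1 w) wA.
move: w'A; rewrite !inE => /andP [w'w /andP [w'1 gw']].
case gwu: (g w u); case gwv: (g w v); move: gw; rewrite gwu gwv //= => _.
- case gw'v: (g w' v).
    by apply: (key u v w' uV2 vV2 guv w'1 w'w gwu _ xu xv); rewrite sym.
  move: gw'; rewrite gw'v orbF => gw'u.
  apply: (key v u w' vV2 uV2 _ w'1 w'w gwv _ xv xu); first by rewrite sym.
  by rewrite sym.
- apply: (key u v yv uV2 vV2 guv yv1 _ gwu gv xu xv).
  by apply/eqP => E; subst yv; move: gwv; rewrite sym gv.
- apply: (key v u yu vV2 uV2 _ yu1 _ gwv gu xv xu); first by rewrite sym.
  by apply/eqP => E; subst yu; move: gwu; rewrite sym gu.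
Qed.
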